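(* For $0<s<1$ let $\varphi_s(z)=sz+(1-s)$ and $C_{\varphi_s}$ the composition operator $f\mapsto f\circ\varphi_s$ on $H^2(\mathbb{D})$. The unital C$^*$-algebra $C^*(\{C_{\varphi_s}:0<s<1\})$ is irreducible; that is, its commutant in $\mathcal{B}(H^2(\mathbb{D}))$ consists only of scalar multiples of the identity.
   Context: $H^2(\mathbb{D})$ is the Hardy space of the unit disk: analytic $f(z)=\sum a_nz^n$ with $\sum|a_n|^2<\infty$. *)

(* Defs.v *)
From Stdlib Require Import Reals.
Open Scope R_scope.

Record Cx := mkC { re : R ; im : R }.

Definition Cadd (z w : Cx) : Cx := mkC (re z + re w) (im z + im w).
Definition Cmul (z w : Cx) : Cx :=
  mkC (re z * re w - im z * im w) (re z * im w + im z * re w).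
Definition Cconj (z : Cx) : Cx := mkC (re z) (- im z).
Definition Cnorm2 (z : Cx) : R := re z * re z + im z * im z.
Definition RtoC (x : R) : Cx := mkC x 0.
Definition C0 : Cx := mkC 0 0.
Definition C1 : Cx := mkC 1 0.
Fixpoint Cpow (z : Cx) (n : nat) : Cx :=
  match n with O => C1 | S k => Cmul z (Cpow z k) end.

Definition Csum (u : nat -> Cx) (w : Cx) : Prop :=
  infinite_sum (fun n => re (u n)) (re w) /\
  infinite_sum (fun n => im (u n)) (im w).

(** H^2(D) as coefficient sequences a with sum |a_n|^2 < oo. *)
Definition seqC := nat -> Cx.
Definition inH2 (a : seqC) : Prop := exists l, infinite_sum (fun n => Cnorm2 (a n)) l.
Definition H2norm2_is (a : seqC) (l : R) : Prop := infinite_sum (fun n => Cnorm2 (a n)) l.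

Definition H2inner_is (a b : seqC) (z : Cx) : Prop :=
  Csum (fun n => Cmul (a n) (Cconj (b n))) z.

Definition evalH2_is (a : seqC) (z w : Cx) : Prop :=
  Csum (fun n => Cmul (a n) (Cpow z n)) w.

Definition phi (s : R) (z : Cx) : Cx := Cadd (Cmul (RtoC s) z) (RtoC (1 - s)).

Definition compIs (s : R) (a b : seqC) : Prop :=
  inH2 b /\
  forall z : Cx, Cnorm2 z < 1 ->
    exists w, evalH2_is b z w /\ evalH2_is a (phi s z) w.

(** Bounded linear operators on H^2 (represented on sequences; only their
    behaviour on H^2 matters). *)
Definition bounded_op (T : seqC -> seqC) : Prop :=
  (forall a, inH2 a -> inH2 (T a)) /\
  (forall a b, inH2 a -> inH2 b -> forall n,
      T (fun k => Cadd (a k) (b k)) n = Cadd (T a n) (T b n)) /\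
  (forall (c : Cx) a, inH2 a -> forall n,
      T (fun k => Cmul c (a k)) n = Cmul c (T a n)) /\
  (exists M, forall a la lTa, inH2 a -> H2norm2_is a la -> H2norm2_is (T a) lTa ->
      lTa <= M * la).

Definition is_comp_adjoint (s : R) (A : seqC -> seqC) : Prop :=
  bounded_op A /\
  forall a b c z, inH2 a -> inH2 c -> compIs s a b ->
    H2inner_is b c z -> H2inner_is a (A c) z.

Definition commutes_comp (s : R) (T : seqC -> seqC) : Prop :=
  forall a b, inH2 a -> compIs s a b -> compIs s (T a) (T b).

Definition commutes_op (T A : seqC -> seqC) : Prop :=
  forall a, inH2 a -> forall n, T (A a) n = A (T a) n.

(* Main.v *)
Require Import Defs.
From Stdlib Require Import Reals.
From Stdlib Require Import Lra Lia Psatz ClassicalEpsilon FunctionalExtensionality.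
Open Scope R_scope.


Lemma lim_le_ev (u : nat -> R) l K N0 :
  Un_cv u l -> (forall n, (N0 <= n)%nat -> u n <= K) -> l <= K.
Proof.
  intros Hu HK. destruct (Rle_dec l K) as [h|h]; auto.
  exfalso. destruct (Hu (l - K)) as [N HN]; [lra|].
  specialize (HN (max N N0) ltac:(lia)). specialize (HK (max N N0) ltac:(lia)).
  unfold Rdist in HN. apply Rabs_def2 in HN. lra.
Qed.

Lemma lim_ge_ev (u : nat -> R) l K N0 :
  Un_cv u l -> (forall n, (N0 <= n)%nat -> K <= u n) -> K <= l.
Proof.
  intros Hu HK. destruct (Rle_dec K l) as [h|h]; auto.
  exfalso. destruct (Hu (K - l)) as [N HN]; [lra|].
  specialize (HN (max N N0) ltac:(lia)). specialize (HK (max N N0) ltac:(lia)).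
  unfold Rdist in HN. apply Rabs_def2 in HN. lra.
Qed.

Lemma lim_le (u : nat -> R) l K : Un_cv u l -> (forall n, u n <= K) -> l <= K.
Proof. intros H1 H2. apply (lim_le_ev u l K 0); auto. Qed.

Lemma nonneg_cv (f : nat -> R) K :
  (forall n, 0 <= f n) -> (forall N, sum_f_R0 f N <= K) ->
  {l | infinite_sum f l /\ l <= K}.
Proof.
  intros H0 HK.
  destruct (growing_cv (sum_f_R0 f)) as [l Hl].
  - intro n. rewrite tech5. specialize (H0 (S n)). lra.
  - exists K. intros x [i ->]. apply HK.
  - exists l. split; [exact Hl|]. apply (lim_le _ _ _ Hl HK).
Qed.

Lemma partial_le_lim (f : nat -> R) l N :
  (forall n, 0 <= f n) -> infinite_sum f l -> sum_f_R0 f N <= l.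
Proof. intros H0 H. apply sum_incr; auto. Qed.

Lemma abs_cv (f g : nat -> R) L :
  (forall n, Rabs (f n) <= g n) -> infinite_sum g L -> {l | infinite_sum f l}.
Proof.
  intros Hfg Hg.
  assert (Hg0 : forall n, 0 <= g n).
  { intro n. specialize (Hfg n). pose proof (Rabs_pos (f n)). lra. }
  destruct (nonneg_cv (fun n => Rabs (f n)) L) as [l [Hl _]].
  - intro; apply Rabs_pos.
  - intro N. apply Rle_trans with (sum_f_R0 g N).
    + apply sum_Rle. intros; apply Hfg.
    + apply partial_le_lim; auto.
  - apply cv_cauchy_2. apply cauchy_abs. apply cv_cauchy_1. exists l. exact Hl.
Qed.

Lemma ps_tail_bound (d : nat -> R) D x n :
  0 <= D -> 0 < x < 1 ->
  (forall m, Rabs (d m) <= D) -> (forall j, (j < n)%nat -> d j = 0) ->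
  forall k, Rabs (sum_f_R0 (fun m => d m * x ^ m) (n + k) - d n * x ^ n)
            + D * x ^ (n + k + 1) / (1 - x) <= D * x ^ (n + 1) / (1 - x).
Proof.
  intros HD Hx Hd Hz k. induction k as [|k IH].
  - rewrite Nat.add_0_r.
    assert (E : sum_f_R0 (fun m => d m * x ^ m) n = d n * x ^ n).
    { destruct n as [|n']; [simpl; ring|]. rewrite tech5.
      rewrite sum_eq_R0; [ring|]. intros j Hj. rewrite Hz; [ring|lia]. }
    rewrite E. replace (d n * x ^ n - d n * x ^ n) with 0 by ring.
    rewrite Rabs_R0. lra.
  - replace (n + S k)%nat with (S (n + k)) by lia. rewrite tech5.
    set (P := sum_f_R0 (fun m => d m * x ^ m) (n + k)) in *.
    assert (H1 : Rabs (P + d (S (n + k)) * x ^ S (n + k) - d n * x ^ n)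
                 <= Rabs (P - d n * x ^ n) + D * x ^ S (n + k)).
    { replace (P + d (S (n + k)) * x ^ S (n + k) - d n * x ^ n)
        with ((P - d n * x ^ n) + d (S (n + k)) * x ^ S (n + k)) by ring.
      eapply Rle_trans; [apply Rabs_triang|]. apply Rplus_le_compat_l.
      rewrite Rabs_mult. rewrite (Rabs_right (x ^ _)).
      2: { apply Rle_ge, pow_le; lra. }
      apply Rmult_le_compat_r; [apply pow_le; lra| apply Hd]. }
    assert (H2 : D * x ^ (S (n + k) + 1) / (1 - x) + D * x ^ S (n + k)
                 = D * x ^ (n + k + 1) / (1 - x)).
    { replace (S (n + k) + 1)%nat with (S (n + k + 1)) by lia.
      replace (S (n + k)) with (n + k + 1)%nat by lia. simpl.
      field. lra. }
    lra.
Qed.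

Lemma ps_unique (d : nat -> R) D :
  (forall n, Rabs (d n) <= D) ->
  (forall x, 0 < x < 1 -> infinite_sum (fun n => d n * x ^ n) 0) ->
  forall n, d n = 0.
Proof.
  intros Hd Hs.
  assert (HD : 0 <= D) by (eapply Rle_trans; [apply Rabs_pos|apply (Hd O)]).
  intro n. induction n as [n IH] using (well_founded_induction Wf_nat.lt_wf).
  assert (Hb : forall x, 0 < x < 1 -> Rabs (d n) * x ^ n <= D * x ^ (n + 1) / (1 - x)).
  { intros x Hx.
    destruct (Rle_dec (Rabs (d n) * x ^ n) (D * x ^ (n + 1) / (1 - x))) as [h|h]; auto.
    exfalso.
    destruct (Hs x Hx (Rabs (d n) * x ^ n - D * x ^ (n + 1) / (1 - x))) as [N HN]; [lra|].
    specialize (HN (n + N)%nat ltac:(lia)). unfold Rdist in HN. rewrite Rminus_0_r in HN.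
    pose proof (ps_tail_bound d D x n HD Hx Hd IH N) as HT.
    assert (HT2 : 0 <= D * x ^ (n + N + 1) / (1 - x)).
    { apply Rmult_le_pos; [apply Rmult_le_pos; [lra|apply pow_le; lra]|].
      apply Rlt_le, Rinv_0_lt_compat; lra. }
    pose proof (Rabs_triang_inv (d n * x ^ n) (sum_f_R0 (fun m => d m * x ^ m) (n + N))) as HR.
    rewrite Rabs_mult, (Rabs_right (x ^ n)) in HR by (apply Rle_ge, pow_le; lra).
    rewrite Rabs_minus_sym in HT. lra. }
  destruct (Req_dec (d n) 0) as [h|h]; auto. exfalso.
  pose proof (Rabs_pos_lt _ h) as Hp.
  set (a := Rabs (d n)) in *.
  set (x := a / (2 * (D + a))).
  assert (Hx : 0 < x < 1 / 2).
  { unfold x. split.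
    - apply Rdiv_lt_0_compat; lra.
    - apply Rmult_lt_reg_r with (2 * (D + a)); [lra|].
      replace (a / (2 * (D + a)) * (2 * (D + a))) with a by (field; lra).
      replace (1 / 2 * (2 * (D + a))) with (D + a) by field. pose proof (Hd n) as Hdn; fold a in Hdn; lra. }
  specialize (Hb x ltac:(lra)).
  assert (Hxn : 0 < x ^ n) by (apply pow_lt; lra).
  rewrite pow_add, pow_1 in Hb.
  assert (Hb2 : a <= D * x / (1 - x)).
  { apply Rmult_le_reg_r with (x ^ n); auto.
    replace (D * x / (1 - x) * x ^ n) with (D * (x ^ n * x) / (1 - x)); [lra|].
    field; lra. }
  assert (Hb3 : D * x / (1 - x) <= 2 * D * x).
  { apply Rmult_le_reg_r with (1 - x); [lra|].
    replace (D * x / (1 - x) * (1 - x)) with (D * x) by (field; lra).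
    assert (0 <= D * x) by (apply Rmult_le_pos; lra). nra. }
  assert (Hb4 : 2 * D * x < a).
  { unfold x. replace (2 * D * (a / (2 * (D + a)))) with (D * a / (D + a)) by (field; lra).
    apply Rmult_lt_reg_r with (D + a); [lra|].
    replace (D * a / (D + a) * (D + a)) with (D * a) by (field; lra). nra. }
  lra.
Qed.

Fixpoint B (s : R) (n m : nat) : R :=
  match n, m with
  | O, O => 1
  | O, S _ => 0
  | S n', O => (1 - s) * B s n' O
  | S n', S m' => s * B s n' m' + (1 - s) * B s n' (S m')
  end.

Lemma sum_shift (f : nat -> R) K :
  sum_f_R0 f (S K) = f O + sum_f_R0 (fun i => f (S i)) K.
Proof. rewrite decomp_sum by lia. reflexivity. Qed.

Lemma B_nonneg s n m : 0 <= s <= 1 -> 0 <= B s n m.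
Proof.
  intro Hs. revert m. induction n as [|n IH]; intros [|m]; simpl; try lra.
  - apply Rmult_le_pos; [lra|apply IH].
  - apply Rplus_le_le_0_compat; apply Rmult_le_pos; try lra; apply IH.
Qed.

Lemma B_zero s n m : (n < m)%nat -> B s n m = 0.
Proof.
  revert m. induction n as [|n IH]; intros [|m] H; simpl; try lia; try reflexivity.
  rewrite !IH by lia. ring.
Qed.

Lemma B_row s y n K : (n <= K)%nat ->
  sum_f_R0 (fun m => B s n m * y ^ m) K = (s * y + (1 - s)) ^ n.
Proof.
  revert K. induction n as [|n IH]; intros K HK.
  - destruct K as [|K]; [simpl; ring|]. rewrite sum_shift.
    rewrite sum_eq_R0; [simpl; ring|]. intros; simpl; ring.
  - destruct K as [|K]; [lia|]. rewrite sum_shift.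
    assert (E : sum_f_R0 (fun i => B s (S n) (S i) * y ^ (S i)) K =
      s * y * sum_f_R0 (fun i => B s n i * y ^ i) K
      + (1 - s) * sum_f_R0 (fun i => B s n (S i) * y ^ (S i)) K).
    { rewrite !scal_sum, <- plus_sum; apply sum_eq; intros; simpl; ring. }
    rewrite E. clear E.
    assert (E2 : B s (S n) 0 = (1 - s) * B s n 0) by reflexivity.
    rewrite E2.
    pose proof (IH (S K) ltac:(lia)) as H1. rewrite sum_shift in H1.
    rewrite (IH K) by lia. simpl pow in *. 
    replace ((1 - s) * B s n 0 * 1 +
      (s * y * (s * y + (1 - s)) ^ n + (1 - s) * sum_f_R0 (fun i => B s n (S i) * (y * y ^ i)) K))
     with (s * y * (s * y + (1 - s)) ^ n + (1 - s) * (B s n 0 * 1 + sum_f_R0 (fun i => B s n (S i) * (y * y ^ i)) K)) by ring.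
    rewrite H1. ring.
Qed.

Lemma B_rowsum1 s n K : (n <= K)%nat -> sum_f_R0 (fun m => B s n m) K = 1.
Proof.
  intro H. transitivity (sum_f_R0 (fun m => B s n m * 1 ^ m) K).
  - apply sum_eq. intros; rewrite pow1; ring.
  - rewrite B_row by auto. replace (s * 1 + (1 - s)) with 1 by ring. apply pow1.
Qed.

Lemma B_col s N m : 0 < s < 1 -> s * sum_f_R0 (fun n => B s n m) N <= 1.
Proof.
  intro Hs. revert m. induction N as [|N IH]; intros m.
  - simpl. destruct m; simpl; lra.
  - rewrite sum_shift. destruct m as [|m].
    + simpl B at 1.
      replace (sum_f_R0 (fun i => B s (S i) 0) N) with ((1 - s) * sum_f_R0 (fun i => B s i 0) N)
        by (rewrite scal_sum; apply sum_eq; intros; simpl; ring).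
      specialize (IH O). nra.
    + simpl B at 1.
      replace (sum_f_R0 (fun i => B s (S i) (S m)) N) with
        (s * sum_f_R0 (fun i => B s i m) N + (1 - s) * sum_f_R0 (fun i => B s i (S m)) N)
        by (rewrite !scal_sum, <- plus_sum; apply sum_eq; intros; simpl; ring).
      pose proof (IH m). pose proof (IH (S m)). nra.
Qed.

Lemma sum_ext_zero (f : nat -> R) n K :
  (forall m, (n < m)%nat -> f m = 0) -> (n <= K)%nat -> sum_f_R0 f K = sum_f_R0 f n.
Proof.
  intros Hf HK. induction K as [|K IH].
  - assert (n = O) by lia. subst. reflexivity.
  - destruct (Nat.eq_dec n (S K)) as [->|h]; [reflexivity|].
    rewrite tech5, IH by lia. rewrite Hf by lia. ring.
Qed.

Lemma sum_swap (u : nat -> nat -> R) N M :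
  sum_f_R0 (fun n => sum_f_R0 (fun m => u n m) M) N =
  sum_f_R0 (fun m => sum_f_R0 (fun n => u n m) N) M.
Proof.
  induction N as [|N IH].
  - reflexivity.
  - rewrite tech5, IH. rewrite <- plus_sum. apply sum_eq. intros. rewrite tech5. reflexivity.
Qed.

Lemma jensen (w x : nat -> R) K :
  (forall i, 0 <= w i) ->
  (sum_f_R0 (fun i => w i * x i) K) ^ 2 <=
  sum_f_R0 w K * sum_f_R0 (fun i => w i * x i ^ 2) K.
Proof.
  intro Hw. induction K as [|K IH].
  - simpl. pose proof (Hw O). nra.
  - rewrite !tech5.
    set (X := sum_f_R0 (fun i => w i * x i) K) in *.
    set (W := sum_f_R0 w K) in *.
    set (Q := sum_f_R0 (fun i => w i * x i ^ 2) K) in *.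
    assert (HW : 0 <= W) by (apply cond_pos_sum; auto).
    assert (HQ : 0 <= Q).
    { apply cond_pos_sum. intro i. apply Rmult_le_pos; auto. apply pow2_ge_0. }
    set (a := w (S K)). set (y := x (S K)).
    assert (Ha : 0 <= a) by apply Hw.
    assert (key : 2 * X * y <= W * y ^ 2 + Q).
    { assert (E : 0 <= (W * y ^ 2 + Q) ^ 2 - (2 * X * y) ^ 2).
      { assert ((W * y ^ 2 + Q) ^ 2 - (2 * X * y) ^ 2 =
                (W * y ^ 2 - Q) ^ 2 + 4 * y ^ 2 * (W * Q - X ^ 2)) by ring.
        rewrite H. apply Rplus_le_le_0_compat; [apply pow2_ge_0|].
        apply Rmult_le_pos; [pose proof (pow2_ge_0 y); lra|]. lra. }
      assert (0 <= W * y ^ 2 + Q) by (pose proof (pow2_ge_0 y); nra).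
      nra. }
    nra.
Qed.

Definition AdjR (s : R) (y : nat -> R) (n : nat) : R :=
  sum_f_R0 (fun m => B s n m * y m) n.

Lemma AdjR_ext s y n K : (n <= K)%nat ->
  sum_f_R0 (fun m => B s n m * y m) K = AdjR s y n.
Proof.
  intro H. unfold AdjR. apply sum_ext_zero; auto. intros m Hm. rewrite B_zero by lia. ring.
Qed.

Lemma AdjR_sq s y n : 0 < s < 1 ->
  (AdjR s y n) ^ 2 <= sum_f_R0 (fun m => B s n m * y m ^ 2) n.
Proof.
  intro Hs. unfold AdjR. eapply Rle_trans; [apply jensen|].
  - intro; apply B_nonneg; lra.
  - rewrite B_rowsum1 by lia. lra.
Qed.

Lemma adj_l2 s y N : 0 < s < 1 ->
  sum_f_R0 (fun n => (AdjR s y n) ^ 2) N <= / s * sum_f_R0 (fun m => y m ^ 2) N.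
Proof.
  intro Hs.
  apply Rle_trans with (sum_f_R0 (fun n => sum_f_R0 (fun m => B s n m * y m ^ 2) N) N).
  - apply sum_Rle. intros n Hn. eapply Rle_trans; [apply AdjR_sq; auto|].
    right. symmetry. apply sum_ext_zero; auto. intros m Hm. rewrite B_zero by lia. ring.
  - rewrite sum_swap. rewrite scal_sum. apply sum_Rle. intros m _.
    replace (sum_f_R0 (fun n => B s n m * y m ^ 2) N) with
      (y m ^ 2 * sum_f_R0 (fun n => B s n m) N) by (rewrite scal_sum; apply sum_eq; intros; ring).
    pose proof (B_col s N m Hs). pose proof (pow2_ge_0 (y m)).
    assert (0 < / s) by (apply Rinv_0_lt_compat; lra).
    apply Rmult_le_reg_l with s; [lra|].
    replace (s * (y m ^ 2 * / s)) with (y m ^ 2) by (field; lra). nra.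
Qed.

Lemma sum_lim (w : nat -> nat -> R) (v : nat -> R) M :
  (forall m, Un_cv (fun N => w N m) (v m)) ->
  Un_cv (fun N => sum_f_R0 (fun m => w N m) M) (sum_f_R0 v M).
Proof.
  intro H. induction M as [|M IH].
  - exact (H O).
  - exact (CV_plus _ _ _ _ IH (H (S M))).
Qed.

Lemma CV_const (c : R) : Un_cv (fun _ => c) c.
Proof. intros eps He. exists O. intros. unfold Rdist. rewrite Rminus_diag, Rabs_R0. lra. Qed.

Lemma Rabs_le_inv' x a : Rabs x <= a -> - a <= x <= a.
Proof. intro H. pose proof (Rle_abs x). pose proof (Rle_abs (- x)). rewrite Rabs_Ropp in *. lra. Qed.

Lemma sum_mono (f : nat -> R) a b : (forall n, 0 <= f n) -> (a <= b)%nat ->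
  sum_f_R0 f a <= sum_f_R0 f b.
Proof.
  intros Hf Hab. induction Hab; [lra|]. rewrite tech5. specialize (Hf (S m)). lra.
Qed.

Lemma fubini (u : nat -> nat -> R) (v : nat -> R) (R0 : R) :
  (forall n m, (n < m)%nat -> u n m = 0) ->
  infinite_sum (fun n => sum_f_R0 (fun m => Rabs (u n m)) n) R0 ->
  (forall m, infinite_sum (fun n => u n m) (v m)) ->
  exists S, infinite_sum (fun n => sum_f_R0 (fun m => u n m) n) S /\ infinite_sum v S.
Proof.
  intros Hz HR Hv.
  set (row := fun n => sum_f_R0 (fun m => u n m) n).
  set (arow := fun n => sum_f_R0 (fun m => Rabs (u n m)) n).
  assert (Harow : forall n, 0 <= arow n).
  { intro n. apply cond_pos_sum. intro; apply Rabs_pos. }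
  destruct (abs_cv row arow R0) as [Sm HS].
  { intro n. apply Rsum_abs. }
  { exact HR. }
  exists Sm. split; [exact HS|].
  assert (Key : forall M, Rabs (sum_f_R0 v M - sum_f_R0 row M) <= R0 - sum_f_R0 arow M).
  { intro M.
    set (g := fun n => sum_f_R0 (fun m => u n m) M).
    assert (Hg : forall n, (n <= M)%nat -> g n = row n).
    { intros n Hn. unfold g, row. apply sum_ext_zero; auto. }
    assert (Hg2 : forall n, Rabs (g n) <= arow n).
    { intro n. unfold g. eapply Rle_trans; [apply Rsum_abs|].
      destruct (Compare_dec.le_lt_dec M n).
      - unfold arow. apply sum_mono; auto. intro; apply Rabs_pos.
      - right. unfold arow. apply sum_ext_zero; [|lia].
        intros m Hm. rewrite Hz by lia. apply Rabs_R0. }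
    assert (Inv : forall k, Rabs (sum_f_R0 g (M + k) - sum_f_R0 row M)
                  <= sum_f_R0 arow (M + k) - sum_f_R0 arow M).
    { induction k as [|k IH].
      - rewrite Nat.add_0_r. rewrite (sum_eq g row M) by auto.
        unfold Rminus. rewrite !Rplus_opp_r, Rabs_R0. lra.
      - replace (M + S k)%nat with (S (M + k)) by lia. rewrite !tech5.
        pose proof (Hg2 (S (M + k))).
        replace (sum_f_R0 g (M + k) + g (S (M + k)) - sum_f_R0 row M) with
          ((sum_f_R0 g (M + k) - sum_f_R0 row M) + g (S (M + k))) by ring.
        eapply Rle_trans; [apply Rabs_triang|]. lra. }
    assert (Hlim : Un_cv (fun N => sum_f_R0 g N) (sum_f_R0 v M)).
    { assert (E : forall N, sum_f_R0 g N = sum_f_R0 (fun m => sum_f_R0 (fun n => u n m) N) M).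
      { intro N. unfold g. apply sum_swap. }
      intros eps Heps. destruct (sum_lim (fun N m => sum_f_R0 (fun n => u n m) N) v M Hv eps Heps)
        as [N HN]. exists N. intros n Hn. rewrite E. apply HN; auto. }
    assert (Bd : forall N, (M <= N)%nat ->
      Rabs (sum_f_R0 g N - sum_f_R0 row M) <= R0 - sum_f_R0 arow M).
    { intros N HN. replace N with (M + (N - M))%nat by lia.
      eapply Rle_trans; [apply Inv|].
      pose proof (partial_le_lim arow R0 (M + (N - M)) Harow HR). lra. }
    apply Rabs_le. split.
    - apply (lim_ge_ev _ _ _ M (CV_minus _ _ _ _ Hlim (CV_const (sum_f_R0 row M)))).
      intros n Hn. specialize (Bd n Hn). apply Rabs_le_inv' in Bd. unfold Rminus in *. lra.
    - apply (lim_le_ev _ _ _ M (CV_minus _ _ _ _ Hlim (CV_const (sum_f_R0 row M)))).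
      intros n Hn. specialize (Bd n Hn). apply Rabs_le_inv' in Bd. lra. }
  intros eps Heps.
  destruct (HS (eps / 2)) as [N1 HN1]; [lra|].
  destruct (HR (eps / 2)) as [N2 HN2]; [lra|].
  exists (max N1 N2). intros n Hn.
  specialize (HN1 n ltac:(lia)). specialize (HN2 n ltac:(lia)).
  specialize (Key n). unfold Rdist in *.
  pose proof (partial_le_lim arow R0 n Harow HR).
  apply Rabs_def2 in HN1. apply Rabs_def2 in HN2. apply Rabs_le_inv' in Key.
  change (sum_f_R0 (fun n => sum_f_R0 (fun m => Rabs (u n m)) n) n) with (sum_f_R0 arow n) in HN2.
  apply Rabs_def1; lra.
Qed.

Lemma Cx_eq (z w : Cx) : re z = re w -> im z = im w -> z = w.
Proof. destruct z, w; simpl; intros; subst; reflexivity. Qed.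

Lemma Cnorm2_nonneg z : 0 <= Cnorm2 z.
Proof. unfold Cnorm2. nra. Qed.

Lemma abs_le_1sq x : Rabs x <= 1 + x * x.
Proof. destruct (Rle_dec 0 x); [rewrite Rabs_right by lra|rewrite Rabs_left by lra]; nra. Qed.

Lemma re_le_norm z : Rabs (re z) <= 1 + Cnorm2 z.
Proof. pose proof (abs_le_1sq (re z)). unfold Cnorm2. nra. Qed.
Lemma im_le_norm z : Rabs (im z) <= 1 + Cnorm2 z.
Proof. pose proof (abs_le_1sq (im z)). unfold Cnorm2. nra. Qed.

Lemma coord_le_norm a l n : H2norm2_is a l -> Cnorm2 (a n) <= l.
Proof.
  intro H. eapply Rle_trans; [|apply (partial_le_lim (fun k => Cnorm2 (a k)) l n)]; auto.
  - destruct n; [simpl; lra|]. rewrite tech5.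
    pose proof (cond_pos_sum (fun n => Cnorm2 (a n)) n (fun k => Cnorm2_nonneg (a k))). lra.
  - intro; apply Cnorm2_nonneg.
Qed.

Lemma infinite_sum_ext f g l : (forall n, f n = g n) -> infinite_sum f l -> infinite_sum g l.
Proof.
  intros E H. replace g with f; auto. apply functional_extensionality; auto.
Qed.

Definition Adj (s : R) (c : seqC) (n : nat) : Cx :=
  mkC (AdjR s (fun m => re (c m)) n) (AdjR s (fun m => im (c m)) n).

Lemma Adj_norm s c N : 0 < s < 1 ->
  sum_f_R0 (fun n => Cnorm2 (Adj s c n)) N <= / s * sum_f_R0 (fun m => Cnorm2 (c m)) N.
Proof.
  intro Hs. unfold Cnorm2, Adj; simpl.
  pose proof (adj_l2 s (fun m => re (c m)) N Hs).
  pose proof (adj_l2 s (fun m => im (c m)) N Hs).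
  replace (sum_f_R0 (fun n => AdjR s (fun m => re (c m)) n * AdjR s (fun m => re (c m)) n
     + AdjR s (fun m => im (c m)) n * AdjR s (fun m => im (c m)) n) N) with
    (sum_f_R0 (fun n => AdjR s (fun m => re (c m)) n ^ 2) N +
     sum_f_R0 (fun n => AdjR s (fun m => im (c m)) n ^ 2) N)
    by (rewrite <- plus_sum; apply sum_eq; intros; ring).
  replace (sum_f_R0 (fun m => re (c m) * re (c m) + im (c m) * im (c m)) N) with
    (sum_f_R0 (fun m => re (c m) ^ 2) N + sum_f_R0 (fun m => im (c m) ^ 2) N)
    by (rewrite <- plus_sum; apply sum_eq; intros; ring).
  lra.
Qed.

Lemma Adj_bounded s : 0 < s < 1 -> bounded_op (Adj s).
Proof.
  intro Hs. split; [|split; [|split]].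
  - intros a [la Ha].
    destruct (nonneg_cv (fun n => Cnorm2 (Adj s a n)) (/ s * la)) as [l [Hl _]].
    + intro; apply Cnorm2_nonneg.
    + intro N. eapply Rle_trans; [apply Adj_norm; auto|].
      apply Rmult_le_compat_l; [apply Rlt_le, Rinv_0_lt_compat; lra|].
      apply partial_le_lim; auto. intro; apply Cnorm2_nonneg.
    + exists l. exact Hl.
  - intros a b _ _ n. apply Cx_eq; unfold Adj, AdjR, Cadd; simpl;
      rewrite <- plus_sum; apply sum_eq; intros; ring.
  - intros c a _ n. apply Cx_eq; unfold Adj, AdjR, Cmul; simpl;
      rewrite !scal_sum; try rewrite <- minus_sum; try rewrite <- plus_sum;
      apply sum_eq; intros; ring.
  - exists (/ s). intros a la lTa _ Ha HTa.
    apply (lim_le _ _ _ HTa). intro N. eapply Rle_trans; [apply Adj_norm; auto|].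
    apply Rmult_le_compat_l; [apply Rlt_le, Rinv_0_lt_compat; lra|].
    apply partial_le_lim; auto. intro; apply Cnorm2_nonneg.
Qed.

Lemma is_scal f l c : infinite_sum f l -> infinite_sum (fun n => f n * c) (l * c).
Proof.
  intros H eps He. destruct (CV_mult _ _ _ _ H (CV_const c) eps He) as [N HN].
  exists N. intros n Hn. specialize (HN n Hn). replace (sum_f_R0 (fun n => f n * c) n) with (sum_f_R0 f n * c) by (rewrite Rmult_comm, scal_sum; reflexivity).
  exact HN.
Qed.

Lemma is_plus f g l1 l2 : infinite_sum f l1 -> infinite_sum g l2 ->
  infinite_sum (fun n => f n + g n) (l1 + l2).
Proof.
  intros H1 H2 eps He. destruct (CV_plus _ _ _ _ H1 H2 eps He) as [N HN].
  exists N. intros n Hn. rewrite plus_sum. apply HN; auto.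
Qed.

Lemma is_minus f g l1 l2 : infinite_sum f l1 -> infinite_sum g l2 ->
  infinite_sum (fun n => f n - g n) (l1 - l2).
Proof.
  intros H1 H2 eps He. destruct (CV_minus _ _ _ _ H1 H2 eps He) as [N HN].
  exists N. intros n Hn. rewrite minus_sum. apply HN; auto.
Qed.

Lemma col_cv s (x : nat -> R) K : 0 < s < 1 -> (forall n, Rabs (x n) <= K) ->
  forall m, {l | infinite_sum (fun n => x n * B s n m) l /\ Rabs l <= K / s}.
Proof.
  intros Hs Hx m.
  assert (HK : 0 <= K) by (eapply Rle_trans; [apply Rabs_pos|apply (Hx O)]).
  assert (Hcol : forall N, sum_f_R0 (fun n => K * B s n m) N <= K / s).
  { intro N. replace (sum_f_R0 (fun n => K * B s n m) N) with (K * sum_f_R0 (fun n => B s n m) N)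
      by (rewrite scal_sum; apply sum_eq; intros; ring).
    pose proof (B_col s N m Hs).
    apply Rmult_le_reg_l with s; [lra|].
    replace (s * (K / s)) with K by (field; lra).
    replace (s * (K * sum_f_R0 (fun i => B s i m) N)) with (K * (s * sum_f_R0 (fun i => B s i m) N)) by ring.
    nra. }
  destruct (nonneg_cv (fun n => K * B s n m) (K / s)) as [L [HL _]].
  { intro n. apply Rmult_le_pos; auto. apply B_nonneg; lra. }
  { exact Hcol. }
  assert (Hab : forall n, Rabs (x n * B s n m) <= K * B s n m).
  { intro n. rewrite Rabs_mult, (Rabs_right (B s n m)) by (apply Rle_ge, B_nonneg; lra).
    apply Rmult_le_compat_r; [apply B_nonneg; lra|apply Hx]. }
  destruct (abs_cv _ _ L Hab HL) as [l Hl].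
  exists l. split; auto.
  apply (lim_le _ _ _ (cv_cvabs _ _ Hl)). intro N.
  eapply Rle_trans; [apply Rsum_abs|]. eapply Rle_trans; [|apply (Hcol N)].
  apply sum_Rle. intros; apply Hab.
Qed.

Lemma geom_bound q N : 0 < q < 1 -> sum_f_R0 (fun n => q ^ n) N <= / (1 - q).
Proof.
  intro Hq. pose proof (GP_finite q N). pose proof (pow_lt q (N + 1) ltac:(lra)).
  apply Rmult_le_reg_r with (1 - q); [lra|]. rewrite Rinv_l by lra. nra.
Qed.

Lemma col_ident s (al be : nat -> R) Ka Kb : 0 < s < 1 ->
  (forall n, Rabs (al n) <= Ka) -> (forall n, Rabs (be n) <= Kb) ->
  (forall x, 0 < x < 1 -> exists W, infinite_sum (fun n => al n * (s * x + (1 - s)) ^ n) W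
       /\ infinite_sum (fun m => be m * x ^ m) W) ->
  forall m, infinite_sum (fun n => al n * B s n m) (be m).
Proof.
  intros Hs Ha Hb Hx.
  assert (HKa : 0 <= Ka) by (eapply Rle_trans; [apply Rabs_pos|apply (Ha O)]).
  pose (Hc := fun m => col_cv s al Ka Hs Ha m).
  set (w := fun m => proj1_sig (Hc m)).
  assert (Hw : forall m, infinite_sum (fun n => al n * B s n m) (w m) /\ Rabs (w m) <= Ka / s)
    by (intro m; exact (proj2_sig (Hc m))).
  assert (E : forall m, be m - w m = 0).
  { apply (ps_unique _ (Kb + Ka / s)).
    - intro n. destruct (Hw n) as [_ h]. pose proof (Hb n).
      unfold Rminus. eapply Rle_trans; [apply Rabs_triang|]. rewrite Rabs_Ropp. lra.
    - intros x Hx01. destruct (Hx x Hx01) as [W [H1 H2]].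
      set (q := s * x + (1 - s)) in *.
      assert (Hq : 0 < q < 1) by (unfold q; nra).
      assert (Hrow : forall n, q ^ n = sum_f_R0 (fun m => B s n m * x ^ m) n)
        by (intro n; unfold q; symmetry; apply B_row; lia).
      destruct (nonneg_cv (fun n => Rabs (al n) * q ^ n) (Ka * / (1 - q))) as [R0 [HR0 _]].
      + intro; apply Rmult_le_pos; [apply Rabs_pos|apply pow_le; lra].
      + intro N. eapply Rle_trans with (sum_f_R0 (fun n => Ka * q ^ n) N).
        * apply sum_Rle. intros. apply Rmult_le_compat_r; [apply pow_le; lra|apply Ha].
        * replace (sum_f_R0 (fun n => Ka * q ^ n) N) with (Ka * sum_f_R0 (fun n => q ^ n) N)
            by (rewrite scal_sum; apply sum_eq; intros; ring).
          apply Rmult_le_compat_l; auto. apply geom_bound; auto.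
      + destruct (fubini (fun n m => al n * B s n m * x ^ m) (fun m => w m * x ^ m) R0)
          as [S [HS1 HS2]].
        * intros n m Hnm. rewrite B_zero by lia. ring.
        * apply (infinite_sum_ext (fun n => Rabs (al n) * q ^ n)); auto.
          intro n. rewrite Hrow, scal_sum.
          apply sum_eq. intros m _. rewrite !Rabs_mult.
          rewrite (Rabs_right (B s n m)) by (apply Rle_ge, B_nonneg; lra).
          rewrite (Rabs_right (x ^ m)) by (apply Rle_ge, pow_le; lra). ring.
        * intro m. apply (is_scal _ _ _ (proj1 (Hw m))).
        * assert (HS : infinite_sum (fun n => al n * q ^ n) S).
          { apply (infinite_sum_ext _ _ _ ltac:(intro n; reflexivity)) in HS1.
            apply (infinite_sum_ext (fun n => sum_f_R0 (fun m => al n * B s n m * x ^ m) n));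
              auto.
            intro n. rewrite Hrow, scal_sum.
            apply sum_eq. intros. ring. }
          assert (S = W) by (apply (uniqueness_sum _ _ _ HS H1)). subst S.
          replace 0 with (W - W) by ring.
          apply (infinite_sum_ext (fun n => be n * x ^ n - w n * x ^ n)).
          { intro; ring. }
          apply is_minus; auto. }
  intro m. specialize (E m). replace (be m) with (w m) by lra. apply Hw.
Qed.

Lemma inner_ident s (a1 a2 g1 g2 b1 b2 : nat -> R) L1 L2 L3 L4 Z : 0 < s < 1 ->
  infinite_sum (fun n => a1 n ^ 2) L1 -> infinite_sum (fun n => a2 n ^ 2) L2 ->
  infinite_sum (fun n => g1 n ^ 2) L3 -> infinite_sum (fun n => g2 n ^ 2) L4 ->
  (forall m, infinite_sum (fun n => a1 n * B s n m) (b1 m)) ->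
  (forall m, infinite_sum (fun n => a2 n * B s n m) (b2 m)) ->
  infinite_sum (fun m => b1 m * g1 m + b2 m * g2 m) Z ->
  infinite_sum (fun n => a1 n * AdjR s g1 n + a2 n * AdjR s g2 n) Z.
Proof.
  intros Hs H1 H2 H3 H4 Hb1 Hb2 HZ.
  set (u := fun n m => B s n m * (a1 n * g1 m + a2 n * g2 m)).
  set (A := fun n => Rabs (a1 n) + Rabs (a2 n)).
  set (gg := fun m => Rabs (g1 m) + Rabs (g2 m)).
  set (G := fun n => AdjR s gg n).
  assert (HB : forall n m, 0 <= B s n m) by (intros; apply B_nonneg; lra).
  assert (Harow : forall n, sum_f_R0 (fun m => Rabs (u n m)) n <= A n * G n).
  { intro n. unfold G, AdjR. rewrite scal_sum. apply sum_Rle. intros m _. unfold u.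
    rewrite Rabs_mult, (Rabs_right (B s n m)) by (apply Rle_ge; auto).
    unfold A, gg.
    pose proof (Rabs_triang (a1 n * g1 m) (a2 n * g2 m)). rewrite !Rabs_mult in H.
    pose proof (Rabs_pos (a1 n)). pose proof (Rabs_pos (a2 n)).
    pose proof (Rabs_pos (g1 m)). pose proof (Rabs_pos (g2 m)). pose proof (HB n m).
    assert (Rabs (a1 n) * Rabs (g1 m) + Rabs (a2 n) * Rabs (g2 m) <=
            (Rabs (a1 n) + Rabs (a2 n)) * (Rabs (g1 m) + Rabs (g2 m))) by nra.
    nra. }
  assert (Hgg : forall N, sum_f_R0 (fun m => gg m ^ 2) N <= 2 * (L3 + L4)).
  { intro N. apply Rle_trans with (sum_f_R0 (fun m => 2 * (g1 m ^ 2) + 2 * (g2 m ^ 2)) N).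
    - apply sum_Rle. intros m _. unfold gg.
      pose proof (Rabs_pos (g1 m)). pose proof (Rabs_pos (g2 m)).
      rewrite <- (pow2_abs (g1 m)), <- (pow2_abs (g2 m)).
      pose proof (pow2_ge_0 (Rabs (g1 m) - Rabs (g2 m))). nra.
    - rewrite plus_sum.
      pose proof (partial_le_lim (fun n => g1 n ^ 2) L3 N (fun n => pow2_ge_0 _) H3).
      pose proof (partial_le_lim (fun n => g2 n ^ 2) L4 N (fun n => pow2_ge_0 _) H4).
      replace (sum_f_R0 (fun i => 2 * g1 i ^ 2) N) with (2 * sum_f_R0 (fun i => g1 i ^ 2) N)
        by (rewrite scal_sum; apply sum_eq; intros; ring).
      replace (sum_f_R0 (fun i => 2 * g2 i ^ 2) N) with (2 * sum_f_R0 (fun i => g2 i ^ 2) N)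
        by (rewrite scal_sum; apply sum_eq; intros; ring).
      lra. }
  assert (HA : forall N, sum_f_R0 (fun n => A n ^ 2) N <= 2 * (L1 + L2)).
  { intro N. apply Rle_trans with (sum_f_R0 (fun m => 2 * (a1 m ^ 2) + 2 * (a2 m ^ 2)) N).
    - apply sum_Rle. intros m _. unfold A.
      pose proof (Rabs_pos (a1 m)). pose proof (Rabs_pos (a2 m)).
      rewrite <- (pow2_abs (a1 m)), <- (pow2_abs (a2 m)).
      pose proof (pow2_ge_0 (Rabs (a1 m) - Rabs (a2 m))). nra.
    - rewrite plus_sum.
      pose proof (partial_le_lim (fun n => a1 n ^ 2) L1 N (fun n => pow2_ge_0 _) H1).
      pose proof (partial_le_lim (fun n => a2 n ^ 2) L2 N (fun n => pow2_ge_0 _) H2).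
      replace (sum_f_R0 (fun i => 2 * a1 i ^ 2) N) with (2 * sum_f_R0 (fun i => a1 i ^ 2) N)
        by (rewrite scal_sum; apply sum_eq; intros; ring).
      replace (sum_f_R0 (fun i => 2 * a2 i ^ 2) N) with (2 * sum_f_R0 (fun i => a2 i ^ 2) N)
        by (rewrite scal_sum; apply sum_eq; intros; ring).
      lra. }
  destruct (nonneg_cv (fun n => sum_f_R0 (fun m => Rabs (u n m)) n)
              ((2 * (L1 + L2) + / s * (2 * (L3 + L4))) / 2)) as [R0 [HR0 _]].
  { intro n. apply cond_pos_sum. intro; apply Rabs_pos. }
  { intro N. apply Rle_trans with (sum_f_R0 (fun n => (A n ^ 2 + G n ^ 2) / 2) N).
    - apply sum_Rle. intros n _. eapply Rle_trans; [apply Harow|].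
      pose proof (pow2_ge_0 (A n - G n)). nra.
    - replace (sum_f_R0 (fun n => (A n ^ 2 + G n ^ 2) / 2) N) with
        ((sum_f_R0 (fun n => A n ^ 2) N + sum_f_R0 (fun n => G n ^ 2) N) / 2)
        by (rewrite <- plus_sum; unfold Rdiv; rewrite Rmult_comm, scal_sum;
            apply sum_eq; intros; ring).
      pose proof (HA N). pose proof (adj_l2 s gg N Hs). pose proof (Hgg N).
      assert (0 < / s) by (apply Rinv_0_lt_compat; lra).
      fold G in H0.
      assert (/ s * sum_f_R0 (fun m => gg m ^ 2) N <= / s * (2 * (L3 + L4)))
        by (apply Rmult_le_compat_l; lra).
      change (sum_f_R0 (fun n => G n ^ 2) N) with (sum_f_R0 (fun n => AdjR s gg n ^ 2) N). lra. }
  destruct (fubini u (fun m => b1 m * g1 m + b2 m * g2 m) R0) as [S [HS1 HS2]].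
  - intros n m Hnm. unfold u. rewrite B_zero by lia. ring.
  - exact HR0.
  - intro m. apply (infinite_sum_ext (fun n => a1 n * B s n m * g1 m + a2 n * B s n m * g2 m)).
    + intro; unfold u; ring.
    + apply is_plus; apply is_scal; auto.
  - assert (S = Z) by (apply (uniqueness_sum _ _ _ HS2 HZ)). subst S.
    apply (infinite_sum_ext _ _ _ ltac:(intro n; reflexivity)) in HS1.
    apply (infinite_sum_ext (fun n => sum_f_R0 (fun m => u n m) n)); auto.
    intro n. unfold u, AdjR. rewrite !scal_sum, <- plus_sum. apply sum_eq. intros; ring.
Qed.

Lemma Cpow_RtoC x n : Cpow (RtoC x) n = RtoC (x ^ n).
Proof.
  induction n as [|n IH]; [reflexivity|]. simpl. rewrite IH.
  apply Cx_eq; unfold Cmul, RtoC; simpl; ring.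
Qed.

Lemma phi_RtoC s x : phi s (RtoC x) = RtoC (s * x + (1 - s)).
Proof. apply Cx_eq; unfold phi, Cadd, Cmul, RtoC; simpl; ring. Qed.

Lemma eval_real a x w : evalH2_is a (RtoC x) w ->
  infinite_sum (fun n => re (a n) * x ^ n) (re w) /\
  infinite_sum (fun n => im (a n) * x ^ n) (im w).
Proof.
  intros [H1 H2]. split.
  - eapply infinite_sum_ext; [|exact H1]; intro n; cbv beta; rewrite Cpow_RtoC; unfold Cmul, RtoC; simpl; ring.
  - eapply infinite_sum_ext; [|exact H2]; intro n; cbv beta; rewrite Cpow_RtoC; unfold Cmul, RtoC; simpl; ring.
Qed.

Lemma sq_cv a la : H2norm2_is a la ->
  (exists L, infinite_sum (fun n => re (a n) ^ 2) L) /\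
  (exists L, infinite_sum (fun n => im (a n) ^ 2) L).
Proof.
  intro H. split.
  - destruct (nonneg_cv (fun n => re (a n) ^ 2) la) as [L [HL _]]; eauto.
    + intro; apply pow2_ge_0.
    + intro N. eapply Rle_trans; [|apply (partial_le_lim (fun n => Cnorm2 (a n)) la N); auto].
      * apply sum_Rle. intros. unfold Cnorm2. simpl. nra.
      * intro; apply Cnorm2_nonneg.
  - destruct (nonneg_cv (fun n => im (a n) ^ 2) la) as [L [HL _]]; eauto.
    + intro; apply pow2_ge_0.
    + intro N. eapply Rle_trans; [|apply (partial_le_lim (fun n => Cnorm2 (a n)) la N); auto].
      * apply sum_Rle. intros. unfold Cnorm2. simpl. nra.
      * intro; apply Cnorm2_nonneg.
Qed.

Lemma adj_ident s : 0 < s < 1 -> is_comp_adjoint s (Adj s).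
Proof.
  intro Hs. split; [apply Adj_bounded; auto|].
  intros a b c z [la Ha] [lc Hc] [[lb Hb] Hcomp] [Hz1 Hz2].
  assert (Bra : forall n, Rabs (re (a n)) <= 1 + la).
  { intro n. pose proof (coord_le_norm a la n Ha). pose proof (re_le_norm (a n)). lra. }
  assert (Bia : forall n, Rabs (im (a n)) <= 1 + la).
  { intro n. pose proof (coord_le_norm a la n Ha). pose proof (im_le_norm (a n)). lra. }
  assert (Brb : forall n, Rabs (re (b n)) <= 1 + lb).
  { intro n. pose proof (coord_le_norm b lb n Hb). pose proof (re_le_norm (b n)). lra. }
  assert (Bib : forall n, Rabs (im (b n)) <= 1 + lb).
  { intro n. pose proof (coord_le_norm b lb n Hb). pose proof (im_le_norm (b n)). lra. }
  assert (Hx : forall x, 0 < x < 1 -> exists w,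
             evalH2_is b (RtoC x) w /\ evalH2_is a (RtoC (s * x + (1 - s))) w).
  { intros x Hx. destruct (Hcomp (RtoC x)) as [w [H1 H2]].
    - unfold Cnorm2, RtoC; simpl; nra.
    - rewrite phi_RtoC in H2. eauto. }
  assert (Cre : forall m, infinite_sum (fun n => re (a n) * B s n m) (re (b m))).
  { apply (col_ident s _ _ (1 + la) (1 + lb) Hs Bra Brb). intros x Hx01.
    destruct (Hx x Hx01) as [w [H1 H2]].
    exists (re w). split; [apply (proj1 (eval_real _ _ _ H2))|apply (proj1 (eval_real _ _ _ H1))]. }
  assert (Cim : forall m, infinite_sum (fun n => im (a n) * B s n m) (im (b m))).
  { apply (col_ident s _ _ (1 + la) (1 + lb) Hs Bia Bib). intros x Hx01.
    destruct (Hx x Hx01) as [w [H1 H2]].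
    exists (im w). split; [apply (proj2 (eval_real _ _ _ H2))|apply (proj2 (eval_real _ _ _ H1))]. }
  destruct (sq_cv a la Ha) as [[L1 HL1] [L2 HL2]].
  destruct (sq_cv c lc Hc) as [[L3 HL3] [L4 HL4]].
  split.
  - apply (infinite_sum_ext (fun n => re (a n) * AdjR s (fun m => re (c m)) n
                                     + im (a n) * AdjR s (fun m => im (c m)) n)).
    { intro; unfold Cmul, Cconj, Adj; simpl; ring. }
    apply (inner_ident s _ _ _ _ (fun m => re (b m)) (fun m => im (b m)) L1 L2 L3 L4); auto.
    eapply infinite_sum_ext; [|exact Hz1]; intro n; cbv beta; unfold Cmul, Cconj; simpl; ring.
  - apply (infinite_sum_ext (fun n => (- re (a n)) * AdjR s (fun m => im (c m)) n
                                     + im (a n) * AdjR s (fun m => re (c m)) n)).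
    { intro; unfold Cmul, Cconj, Adj; simpl; ring. }
    apply (inner_ident s _ _ _ _ (fun m => - re (b m)) (fun m => im (b m)) L1 L2 L4 L3); auto.
    + eapply infinite_sum_ext; [|exact HL1]; intro n; cbv beta; ring.
    + intro m. replace (- re (b m)) with (re (b m) * (-1)) by ring.
      eapply infinite_sum_ext; [|exact (is_scal _ _ (-1) (Cre m))]; intro n; cbv beta; ring.
    + eapply infinite_sum_ext; [|exact Hz2]; intro n; cbv beta; unfold Cmul, Cconj; simpl; ring.
Qed.

Definition e (m : nat) : seqC := fun k => if Nat.eqb k m then Defs.C1 else Defs.C0.
Definition trunc (a : seqC) (N : nat) : seqC := fun k => if Nat.leb k N then a k else Defs.C0.
Definition tail (a : seqC) (N : nat) : seqC := fun k => if Nat.leb k N then Defs.C0 else a k.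

Lemma ev_const (h : nat -> R) c N :
  (forall K, (N <= K)%nat -> sum_f_R0 h K = c) -> infinite_sum h c.
Proof.
  intros H eps He. exists N. intros n Hn. rewrite H by lia. unfold Rdist.
  rewrite Rminus_diag, Rabs_R0. lra.
Qed.

Lemma single_sum p c : infinite_sum (fun n => if Nat.eqb n p then c else 0) c.
Proof.
  apply (ev_const _ _ p). intros K HK. rewrite (sum_ext_zero _ p K); auto.
  - destruct p as [|p]; [simpl; reflexivity|]. rewrite tech5, Nat.eqb_refl.
    rewrite sum_eq_R0; [ring|]. intros n Hn. destruct (Nat.eqb_spec n (S p)); [lia|reflexivity].
  - intros m Hm. destruct (Nat.eqb_spec m p); [lia|reflexivity].
Qed.

Lemma Cnorm2_C0 : Cnorm2 Defs.C0 = 0.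
Proof. unfold Cnorm2, Defs.C0; simpl; ring. Qed.

Lemma finsupp_norm (f : seqC) N : (forall k, (N < k)%nat -> f k = Defs.C0) ->
  H2norm2_is f (sum_f_R0 (fun k => Cnorm2 (f k)) N).
Proof.
  intro H. apply (ev_const _ _ N). intros K HK. apply sum_ext_zero; auto.
  intros m Hm. rewrite H by lia. apply Cnorm2_C0.
Qed.

Lemma finsupp_inH2 (f : seqC) N : (forall k, (N < k)%nat -> f k = Defs.C0) -> inH2 f.
Proof. intro H. eexists. apply (finsupp_norm f N H). Qed.

Lemma e_norm m : H2norm2_is (e m) 1.
Proof.
  eapply infinite_sum_ext; [|apply (single_sum m 1)].
  intro n. unfold e. destruct (Nat.eqb n m); unfold Cnorm2, Defs.C1, Defs.C0; simpl; ring.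
Qed.

Lemma e_inH2 m : inH2 (e m).
Proof. exists 1. apply e_norm. Qed.

Lemma Cmul_C1 z : Cmul z Defs.C1 = z.
Proof. apply Cx_eq; unfold Cmul, Defs.C1; simpl; ring. Qed.
Lemma Cmul_C0 z : Cmul z Defs.C0 = Defs.C0.
Proof. apply Cx_eq; unfold Cmul, Defs.C0; simpl; ring. Qed.
Lemma Cadd_C0 z : Cadd z Defs.C0 = z.
Proof. apply Cx_eq; unfold Cadd, Defs.C0; simpl; ring. Qed.
Lemma Cadd_C0l z : Cadd Defs.C0 z = z.
Proof. apply Cx_eq; unfold Cadd, Defs.C0; simpl; ring. Qed.


Lemma T_trunc (T : seqC -> seqC) a p :
  bounded_op T -> forall N,
  re (T (trunc a N) p) = sum_f_R0 (fun m => re (Cmul (a m) (T (e m) p))) N /\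
  im (T (trunc a N) p) = sum_f_R0 (fun m => im (Cmul (a m) (T (e m) p))) N.
Proof.
  intros [Hin [Hadd [Hhom _]]] N. induction N as [|N IH].
  - assert (E : trunc a 0 = fun k => Cmul (a O) (e O k)).
    { apply functional_extensionality. intro k. unfold trunc, e.
      destruct k; simpl; [rewrite Cmul_C1; reflexivity|rewrite Cmul_C0; reflexivity]. }
    rewrite E, Hhom by apply e_inH2. simpl. split; reflexivity.
  - assert (E : trunc a (S N) = fun k => Cadd (trunc a N k) (Cmul (a (S N)) (e (S N) k))).
    { apply functional_extensionality. intro k. unfold trunc, e.
      destruct (Nat.leb_spec k N); destruct (Nat.leb_spec k (S N)); destruct (Nat.eqb_spec k (S N));
        try lia; subst; rewrite ?Cmul_C0, ?Cmul_C1, ?Cadd_C0, ?Cadd_C0l; reflexivity. }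
    rewrite E, Hadd.
    + rewrite Hhom by apply e_inH2. destruct IH as [H1 H2].
      split; [rewrite tech5, <- H1|rewrite tech5, <- H2]; reflexivity.
    + apply (finsupp_inH2 _ N). intros k Hk. unfold trunc. destruct (Nat.leb_spec k N); [lia|reflexivity].
    + apply (finsupp_inH2 _ (S N)). intros k Hk. unfold e. destruct (Nat.eqb_spec k (S N)); [lia|].
      apply Cmul_C0.
Qed.

Lemma tail_norm a la N : H2norm2_is a la ->
  H2norm2_is (tail a N) (la - sum_f_R0 (fun k => Cnorm2 (a k)) N).
Proof.
  intro Ha.
  set (h := fun k => if Nat.leb k N then Cnorm2 (a k) else 0).
  eapply infinite_sum_ext; [|apply (is_minus _ h _ _ Ha)].
  - intro k. unfold tail, h. destruct (Nat.leb k N); [rewrite Cnorm2_C0; ring|ring].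
  - apply (ev_const _ _ N). intros K HK. rewrite (sum_ext_zero h N K); auto.
    + apply sum_eq. intros i Hi. unfold h. destruct (Nat.leb_spec i N); [reflexivity|lia].
    + intros m Hm. unfold h. destruct (Nat.leb_spec m N); [lia|reflexivity].
Qed.

Lemma T_cont (T : seqC -> seqC) a p :
  bounded_op T -> inH2 a ->
  infinite_sum (fun m => re (Cmul (a m) (T (e m) p))) (re (T a p)) /\
  infinite_sum (fun m => im (Cmul (a m) (T (e m) p))) (im (T a p)).
Proof.
  intros HT [la Ha]. pose proof HT as [Hin [Hadd [Hhom [M HM]]]].
  set (SN := fun N => sum_f_R0 (fun k => Cnorm2 (a k)) N).
  assert (Key : forall N, (re (T a p) - re (T (trunc a N) p)) ^ 2 <= Rabs M * (la - SN N) /\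
                          (im (T a p) - im (T (trunc a N) p)) ^ 2 <= Rabs M * (la - SN N)).
  { intro N.
    assert (E : a = fun k => Cadd (trunc a N k) (tail a N k)).
    { apply functional_extensionality. intro k. unfold trunc, tail.
      destruct (Nat.leb k N); [rewrite Cadd_C0|rewrite Cadd_C0l]; reflexivity. }
    assert (Htr : inH2 (trunc a N)).
    { apply (finsupp_inH2 _ N). intros k Hk. unfold trunc. destruct (Nat.leb_spec k N); [lia|reflexivity]. }
    pose proof (tail_norm a la N Ha) as Htn.
    assert (Hti : inH2 (tail a N)) by (eexists; eauto).
    destruct (Hin _ Hti) as [l Hl].
    pose proof (HM _ _ _ Hti Htn Hl) as HMl.
    pose proof (coord_le_norm _ _ p Hl) as Hc.
    assert (Hpos : 0 <= la - SN N).
    { unfold SN. pose proof (partial_le_lim (fun k => Cnorm2 (a k)) la N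
        (fun k => Cnorm2_nonneg _) Ha). lra. }
    assert (M * (la - SN N) <= Rabs M * (la - SN N))
      by (apply Rmult_le_compat_r; [lra|apply Rle_abs]).
    assert (Eq : T a p = Cadd (T (trunc a N) p) (T (tail a N) p)).
    { rewrite <- Hadd by auto. rewrite <- E. reflexivity. }
    rewrite Eq. unfold Cadd; simpl. unfold Cnorm2 in Hc.
    replace (re (T (trunc a N) p) + re (T (tail a N) p) - re (T (trunc a N) p))
      with (re (T (tail a N) p)) by ring.
    replace (im (T (trunc a N) p) + im (T (tail a N) p) - im (T (trunc a N) p))
      with (im (T (tail a N) p)) by ring.
    unfold SN in *. split; nra. }
  assert (Conv : forall (f : nat -> R) (g : R),
    (forall N, (g - f N) ^ 2 <= Rabs M * (la - SN N)) -> Un_cv f g).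
  { intros f g Hf eps He.
    destruct (Ha (eps ^ 2 / (Rabs M + 1))) as [N0 HN0].
    { apply Rdiv_lt_0_compat; [nra|pose proof (Rabs_pos M); lra]. }
    exists N0. intros n Hn. specialize (HN0 n Hn). specialize (Hf n).
    unfold Rdist in *. fold (SN n) in HN0.
    apply Rabs_def2 in HN0.
    assert (Hlt : (g - f n) ^ 2 < eps ^ 2).
    { pose proof (Rabs_pos M).
      assert (Rabs M * (la - SN n) <= Rabs M * (eps ^ 2 / (Rabs M + 1))).
      { apply Rmult_le_compat_l; lra. }
      assert (Rabs M * (eps ^ 2 / (Rabs M + 1)) < eps ^ 2).
      { apply Rmult_lt_reg_r with (Rabs M + 1); [lra|].
        replace (Rabs M * (eps ^ 2 / (Rabs M + 1)) * (Rabs M + 1)) with (Rabs M * eps ^ 2)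
          by (field; lra). nra. }
      lra. }
    rewrite Rabs_minus_sym. rewrite <- (Rabs_right eps) by lra. apply Rsqr_lt_abs_0.
    unfold Rsqr. simpl in Hlt. lra. }
  split.
  - intros eps He.
    destruct (Conv (fun N => re (T (trunc a N) p)) (re (T a p)) (fun N => proj1 (Key N)) eps He)
      as [N HN]. exists N. intros n Hn. rewrite <- (proj1 (T_trunc T a p HT n)). apply HN; auto.
  - intros eps He.
    destruct (Conv (fun N => im (T (trunc a N) p)) (im (T a p)) (fun N => proj2 (Key N)) eps He)
      as [N HN]. exists N. intros n Hn. rewrite <- (proj2 (T_trunc T a p HT n)). apply HN; auto.
Qed.

Lemma eval_e0 z : evalH2_is (e 0) z Defs.C1.
Proof.
  split; apply (ev_const _ _ 0); intros K HK; rewrite (sum_ext_zero _ 0 K); auto;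
    try (simpl; unfold e, Cmul, Defs.C1; simpl; ring);
    intros m Hm; unfold e; destruct (Nat.eqb_spec m 0); try lia;
    unfold Cmul, Defs.C0; simpl; ring.
Qed.

Lemma B0 s n : B s n 0 = (1 - s) ^ n.
Proof. induction n; simpl; [reflexivity|rewrite IHn; ring]. Qed.

Lemma AdjR_first s y n : (forall m, (0 < m)%nat -> y m = 0) -> AdjR s y n = B s n 0 * y O.
Proof.
  intro H. unfold AdjR. rewrite (sum_ext_zero _ 0 n); [reflexivity| |lia].
  intros m Hm. rewrite H by lia. ring.
Qed.

Lemma eval_C0 g w : evalH2_is g Defs.C0 w -> re w = re (g O) /\ im w = im (g O).
Proof.
  intros [H1 H2].
  assert (Hp : forall n, (0 < n)%nat -> Cpow Defs.C0 n = Defs.C0).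
  { intros [|n] Hn; [lia|]. simpl. apply Cx_eq; unfold Cmul, Defs.C0; simpl; ring. }
  split; eapply uniqueness_sum; eauto; apply (ev_const _ _ 0); intros K HK;
    rewrite (sum_ext_zero _ 0 K); auto;
    try (simpl; unfold Cmul, Defs.C1; simpl; ring);
    intros m Hm; rewrite Hp by lia; unfold Cmul, Defs.C0; simpl; ring.
Qed.

Theorem mainTheorem19 :
  forall T : seqC -> seqC,
    bounded_op T ->
    (forall s, 0 < s < 1 -> commutes_comp s T) ->
    (forall s A, 0 < s < 1 -> is_comp_adjoint s A -> commutes_op T A) ->
    exists lam : Cx, forall a, inH2 a -> forall n, T a n = Cmul lam (a n).
Proof.
  intros T HT Hc Ha.
  pose proof HT as [Hin [Hadd [Hhom [M HM]]]].
  set (g := T (e 0)).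
  set (lam := g O).
  (* step 1: T e0 = lam e0 *)
  assert (Hg : forall x, 0 < x < 1 ->
     infinite_sum (fun n => re (g n) * x ^ n) (re lam) /\
     infinite_sum (fun n => im (g n) * x ^ n) (im lam)).
  { intros x Hx.
    assert (Hs : 0 < 1 - x < 1) by lra.
    assert (Hce : compIs (1 - x) (e 0) (e 0)).
    { split; [apply e_inH2|]. intros z _. exists Defs.C1. split; apply eval_e0. }
    destruct (Hc _ Hs _ _ (e_inH2 0) Hce) as [_ Hg].
    destruct (Hg Defs.C0) as [w [Hw1 Hw2]].
    { rewrite Cnorm2_C0. lra. }
    replace (phi (1 - x) Defs.C0) with (RtoC x) in Hw2
      by (apply Cx_eq; unfold phi, Cadd, Cmul, RtoC, Defs.C0; simpl; ring).
    destruct (eval_C0 _ _ Hw1) as [E1 E2]. destruct (eval_real _ _ _ Hw2) as [F1 F2].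
    fold g in E1, E2, F1, F2. unfold lam. rewrite <- E1, <- E2. auto. }
  assert (Hg0 : forall n, (0 < n)%nat -> g n = Defs.C0).
  { assert (Hla : exists l, H2norm2_is g l) by (apply Hin, e_inH2).
    destruct Hla as [l Hl].
    assert (Re : forall n, (if Nat.eqb n 0 then 0 else re (g n)) = 0).
    { apply (ps_unique _ (1 + l)).
      - intro n. destruct (Nat.eqb n 0); [rewrite Rabs_R0; pose proof (Cnorm2_nonneg (g O));
          pose proof (coord_le_norm g l O Hl); lra|].
        pose proof (re_le_norm (g n)). pose proof (coord_le_norm g l n Hl). lra.
      - intros x Hx. replace 0 with (re lam - re lam) by ring.
        eapply infinite_sum_ext; [|apply (is_minus _ _ _ _ (proj1 (Hg x Hx)) (single_sum 0 (re lam)))].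
        intro n. cbv beta. destruct (Nat.eqb_spec n 0); [subst; simpl; unfold lam; ring|ring]. }
    assert (Im : forall n, (if Nat.eqb n 0 then 0 else im (g n)) = 0).
    { apply (ps_unique _ (1 + l)).
      - intro n. destruct (Nat.eqb n 0); [rewrite Rabs_R0; pose proof (Cnorm2_nonneg (g O));
          pose proof (coord_le_norm g l O Hl); lra|].
        pose proof (im_le_norm (g n)). pose proof (coord_le_norm g l n Hl). lra.
      - intros x Hx. replace 0 with (im lam - im lam) by ring.
        eapply infinite_sum_ext; [|apply (is_minus _ _ _ _ (proj2 (Hg x Hx)) (single_sum 0 (im lam)))].
        intro n. cbv beta. destruct (Nat.eqb_spec n 0); [subst; simpl; unfold lam; ring|ring]. }
    intros n Hn. specialize (Re n). specialize (Im n).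
    destruct (Nat.eqb_spec n 0); [lia|]. apply Cx_eq; simpl; auto. }
  assert (Hk : forall t p, 0 < t < 1 ->
     re (T (fun n => RtoC (t ^ n)) p) = t ^ p * re lam /\
     im (T (fun n => RtoC (t ^ n)) p) = t ^ p * im lam).
  { intros t p Ht.
    assert (Hs : 0 < 1 - t < 1) by lra.
    pose proof (Ha _ _ Hs (adj_ident _ Hs) (e 0) (e_inH2 0) p) as H.
    assert (E : Adj (1 - t) (e 0) = fun n => RtoC (t ^ n)).
    { apply functional_extensionality. intro n. unfold Adj. apply Cx_eq; simpl.
      - rewrite AdjR_first, B0; [unfold e; simpl; replace (1 - (1 - t)) with t by ring; ring|].
        intros m Hm. unfold e. destruct (Nat.eqb_spec m 0); [lia|reflexivity].
      - rewrite AdjR_first; [unfold e; simpl; ring|].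
        intros m Hm. unfold e. destruct (Nat.eqb_spec m 0); [lia|reflexivity]. }
    rewrite E in H. rewrite H. fold g. unfold Adj; simpl.
    rewrite !AdjR_first, B0.
    - replace (1 - (1 - t)) with t by ring. unfold lam. split; reflexivity.
    - intros m Hm. rewrite Hg0 by lia. reflexivity.
    - intros m Hm. rewrite Hg0 by lia. reflexivity. }
  assert (He : forall m p, T (e m) p = if Nat.eqb m p then lam else Defs.C0).
  { intros m0 p.
    assert (Hb : forall m, Rabs (re (T (e m) p)) <= 1 + Rabs M /\ Rabs (im (T (e m) p)) <= 1 + Rabs M).
    { intro m. destruct (Hin _ (e_inH2 m)) as [l Hl].
      pose proof (HM _ _ _ (e_inH2 m) (e_norm m) Hl). pose proof (coord_le_norm _ _ p Hl).
      pose proof (re_le_norm (T (e m) p)). pose proof (im_le_norm (T (e m) p)).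
      pose proof (Rle_abs M). split; lra. }
    assert (Hkin : forall t, 0 < t < 1 -> inH2 (fun n => RtoC (t ^ n))).
    { intros t Ht. destruct (nonneg_cv (fun n => Cnorm2 (RtoC (t ^ n))) (/ (1 - t ^ 2))) as [l [Hl _]].
      - intro; apply Cnorm2_nonneg.
      - intro N. eapply Rle_trans; [|apply (geom_bound (t ^ 2) N); nra].
        right. apply sum_eq. intros. unfold Cnorm2, RtoC; cbn [re im]. rewrite <- pow_mult.
        replace (2 * i)%nat with (i + i)%nat by lia. rewrite pow_add. ring.
      - exists l. exact Hl. }
    assert (Re : forall m, re (T (e m) p) - (if Nat.eqb m p then re lam else 0) = 0).
    { apply (ps_unique _ (1 + Rabs M + Rabs (re lam))).
      - intro m. destruct (Hb m) as [Hb1 _]. unfold Rminus.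
        eapply Rle_trans; [apply Rabs_triang|]. rewrite Rabs_Ropp.
        destruct (Nat.eqb m p); [lra|rewrite Rabs_R0; pose proof (Rabs_pos (re lam)); lra].
      - intros t Ht. destruct (T_cont T _ p HT (Hkin t Ht)) as [H1 _].
        rewrite (proj1 (Hk t p Ht)) in H1.
        replace 0 with (t ^ p * re lam - re lam * t ^ p) by ring.
        eapply infinite_sum_ext; [|apply (is_minus _ _ _ _ H1 (single_sum p (re lam * t ^ p)))].
        intro n. cbv beta. unfold Cmul, RtoC; simpl.
        destruct (Nat.eqb_spec n p); [subst; ring|ring]. }
    assert (Im : forall m, im (T (e m) p) - (if Nat.eqb m p then im lam else 0) = 0).
    { apply (ps_unique _ (1 + Rabs M + Rabs (im lam))).
      - intro m. destruct (Hb m) as [_ Hb1]. unfold Rminus.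
        eapply Rle_trans; [apply Rabs_triang|]. rewrite Rabs_Ropp.
        destruct (Nat.eqb m p); [lra|rewrite Rabs_R0; pose proof (Rabs_pos (im lam)); lra].
      - intros t Ht. destruct (T_cont T _ p HT (Hkin t Ht)) as [_ H1].
        rewrite (proj2 (Hk t p Ht)) in H1.
        replace 0 with (t ^ p * im lam - im lam * t ^ p) by ring.
        eapply infinite_sum_ext; [|apply (is_minus _ _ _ _ H1 (single_sum p (im lam * t ^ p)))].
        intro n. cbv beta. unfold Cmul, RtoC; simpl.
        destruct (Nat.eqb_spec n p); [subst; ring|ring]. }
    specialize (Re m0). specialize (Im m0).
    destruct (Nat.eqb m0 p); apply Cx_eq; unfold Defs.C0; simpl; lra. }
  exists lam. intros a Ha2 p.
  destruct (T_cont T a p HT Ha2) as [H1 H2].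
  assert (E1 : re (T a p) = re (Cmul lam (a p))).
  { eapply uniqueness_sum; [exact H1|].
    eapply infinite_sum_ext; [|apply (single_sum p (re (Cmul lam (a p))))].
    intro n. cbv beta. rewrite He. destruct (Nat.eqb_spec n p); [subst|];
      unfold Cmul, Defs.C0; simpl; ring. }
  assert (E2 : im (T a p) = im (Cmul lam (a p))).
  { eapply uniqueness_sum; [exact H2|].
    eapply infinite_sum_ext; [|apply (single_sum p (im (Cmul lam (a p))))].
    intro n. cbv beta. rewrite He. destruct (Nat.eqb_spec n p); [subst|];
      unfold Cmul, Defs.C0; simpl; ring. }
  apply Cx_eq; auto.
Qed.
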